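(* Let $a,c>0$ and $b,d<0$ be real numbers with $x_A<x_B$, and let $W_0(z)=1$, $W_1(z)=z$, $W_n(z)=(az+b)W_{n-1}(z)+(cz+d)W_{n-2}(z)$ for $n\ge2$. Then every $W_n(z)$ is real-rooted with $n$ distinct zeros; denoting by $R_n$ the zero set of $W_n(z)$, we have $R_n\subset(u,v)$ and $R_{n+1}$ strictly interlaces $R_n$ for every $n\ge0$. Moreover, the bound is sharp: both $u$ and $v$ are limits of zeros of $\{W_n(z)\}$.
   Context: Notation: $A(z)=az+b$, $B(z)=cz+d$, $x_A=-b/a$, $x_B=-d/c$, $\Delta_\Delta=c^2-a^2B(x_A)$, $x_\Delta^\pm=x_A+\frac{-2c\pm2\sqrt{\Delta_\Delta}}{a^2}$, $g(z)=(1-a)z^2-(b+c)z-d$, $\Delta_g=(b+c)^2+4d(1-a)$, $F=\Delta_g-\Delta_\Delta=d(a-2)^2+bc(2-a)+b^2$. The zeros of $g$ are $x_g^\pm=\frac{b+c}{2(1-a)}\pm\frac{\sqrt{\Delta_g}}{2|1-a|}$ if $a\neq1$, and $x_g^\pm=-d/(b+c)$ if $a=1$ and $b+c\ne0$. Define $(u,v)=(x_\Delta^-,x_\Delta^+)$ if $a<2$ and $F\le0$; $(u,v)=(x_g^-,x_g^+)$ if $a>2$ and $F<0$; $(u,v)=(x_g^+,x_\Delta^+)$ if $a<1$ and $F>0$; and $(u,v)=(x_g^-,x_\Delta^+)$ otherwise. For finite $X,Y\subset\mathbb{R}$ with $|X|-|Y|\in\{0,1\}$, $X$ strictly interlaces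 $Y$ if their elements can be ordered as $x_1<y_1<x_2<y_2<\cdots$. A number $z^*$ is a limit of zeros if there exist zeros $z_n$ of $W_n$ with $z_n\to z^*$. *)

(* Defs.v *)
From Stdlib Require Import Reals Lra List Sorting.Sorted Permutation.
Import ListNotations.
Open Scope R_scope.

Fixpoint W (a b c d : R) (n : nat) (z : R) : R :=
  match n with
  | O => 1
  | S m =>
      match m with
      | O => z
      | S k => (a * z + b) * W a b c d m z + (c * z + d) * W a b c d k z
      end
  end.

Definition xA (a b : R) : R := - b / a.
Definition xB (c d : R) : R := - d / c.
Definition Bfun (c d z : R) : R := c * z + d.
Definition DeltaDelta (a b c d : R) : R := c ^ 2 - a ^ 2 * Bfun c d (xA a b).
Definition xDelta_minus (a b c d : R) : R :=
  xA a b + (- 2 * c - 2 * sqrt (DeltaDelta a b c d)) / a ^ 2.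
Definition xDelta_plus (a b c d : R) : R :=
  xA a b + (- 2 * c + 2 * sqrt (DeltaDelta a b c d)) / a ^ 2.
Definition Deltag (a b c d : R) : R := (b + c) ^ 2 + 4 * d * (1 - a).
Definition Ffun (a b c d : R) : R := Deltag a b c d - DeltaDelta a b c d.

(* zeros of g; when a = 1 and b + c = 0 the value is irrelevant (never used) *)
Definition xg_minus (a b c d : R) : R :=
  if Req_EM_T a 1 then - d / (b + c)
  else (b + c) / (2 * (1 - a)) - sqrt (Deltag a b c d) / (2 * Rabs (1 - a)).
Definition xg_plus (a b c d : R) : R :=
  if Req_EM_T a 1 then - d / (b + c)
  else (b + c) / (2 * (1 - a)) + sqrt (Deltag a b c d) / (2 * Rabs (1 - a)).

Definition uv (a b c d : R) : R * R :=
  let F := Ffun a b c d in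
  if Rlt_dec a 2 then
    if Rle_dec F 0 then (xDelta_minus a b c d, xDelta_plus a b c d)
    else if Rlt_dec a 1 then (xg_plus a b c d, xDelta_plus a b c d)
    else (xg_minus a b c d, xDelta_plus a b c d)
  else if Rlt_dec 2 a then
    if Rlt_dec F 0 then (xg_minus a b c d, xg_plus a b c d)
    else (xg_minus a b c d, xDelta_plus a b c d)
  else (xg_minus a b c d, xDelta_plus a b c d).

Definition prod_lin (rs : list R) (z : R) : R :=
  fold_right (fun r acc => (z - r) * acc) 1 rs.

Definition zero_list (a b c d : R) (n : nat) (rs : list R) : Prop :=
  NoDup rs /\ forall z, W a b c d n z = 0 <-> In z rs.

Fixpoint interleave (xs ys : list R) : list R :=
  match xs with
  | [] => ys
  | x :: xs' =>
      match ys with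
      | [] => x :: xs'
      | y :: ys' => x :: y :: interleave xs' ys'
      end
  end.

(* X strictly interlaces Y: |X| - |Y| in {0,1} and the elements can be
   ordered as x1 < y1 < x2 < y2 < ... *)
Definition strictly_interlaces (X Y : list R) : Prop :=
  exists xs ys, Permutation X xs /\ Permutation Y ys /\
    (length xs = length ys \/ length xs = S (length ys)) /\
    StronglySorted Rlt (interleave xs ys).

Definition limit_of_zeros (a b c d : R) (zs : R) : Prop :=
  exists z : nat -> R,
    (forall n, (1 <= n)%nat -> W a b c d n (z n) = 0) /\ Un_cv z zs.

(* Main.v *)
Require Import Defs.
From Stdlib Require Import Reals Lra Lia List Sorting.Sorted Permutation Classical ClassicalEpsilon.
Import ListNotations.
Open Scope R_scope.



Fixpoint V (al be p : R) (n : nat) : R :=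
  match n with
  | O => 1
  | S m => match m with O => p | S k => al * V al be p m + be * V al be p k end
  end.

Lemma V_SS al be p n : V al be p (S (S n)) = al * V al be p (S n) + be * V al be p n.
Proof. reflexivity. Qed.

Lemma W_SS a b c d n z : W a b c d (S (S n)) z =
  (a * z + b) * W a b c d (S n) z + (c * z + d) * W a b c d n z.
Proof. reflexivity. Qed.

Lemma W_V a b c d m z : W a b c d m z = V (a*z+b) (c*z+d) z m.
Proof.
  assert (H : forall n, W a b c d n z = V (a*z+b) (c*z+d) z n /\
                        W a b c d (S n) z = V (a*z+b) (c*z+d) z (S n)).
  { induction n as [|n IH]; [split; reflexivity|].
    destruct IH as [H1 H2]; split; [exact H2|].
    rewrite W_SS, V_SS, H1, H2; reflexivity. }
  apply H.
Qed.

Lemma W_Vneg a b c d m z : (-1)^m * W a b c d m z = V (-(a*z+b)) (c*z+d) (-z) m.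
Proof.
  assert (H : forall n, (-1)^n * W a b c d n z = V (-(a*z+b)) (c*z+d) (-z) n /\
                        (-1)^(S n) * W a b c d (S n) z = V (-(a*z+b)) (c*z+d) (-z) (S n)).
  { induction n as [|n IH]; [simpl; split; ring|].
    destruct IH as [H1 H2]; split; [exact H2|].
    rewrite W_SS, V_SS, <- H1, <- H2. simpl. ring. }
  apply H.
Qed.

Lemma V_pos al be p : be < 0 -> 0 < al -> 0 <= al^2 + 4*be ->
  (al <= 2*p \/ p^2 - al*p - be <= 0) -> forall n, 0 < V al be p n.
Proof.
  intros hbe hal hD hp.
  set (s := sqrt (al^2 + 4*be)).
  assert (hs0 : 0 <= s) by apply sqrt_pos.
  assert (hs2 : s * s = al^2 + 4*be) by (apply sqrt_sqrt; lra).
  assert (hsal : s < al) by nra.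
  set (mu := (al - s)/2). set (lam := (al + s)/2).
  assert (hmu : 0 < mu) by (unfold mu; lra).
  assert (hlam : 0 < lam) by (unfold lam; lra).
  assert (hml : mu * lam = - be) by (unfold mu, lam; nra).
  assert (hpm : mu <= p).
  { destruct hp as [hp|hp]. unfold mu; lra.
    destruct (Rle_dec mu p) as [h|h]; auto.
    exfalso. assert (p^2 - al*p - be = (p - mu)*(p-lam)) by (unfold mu, lam; nra).
    assert (p < lam) by (unfold mu, lam in *; lra). nra. }
  assert (I : forall n, 0 < V al be p n /\ mu * V al be p n <= V al be p (S n)).
  { induction n as [|n [IH1 IH2]].
    - simpl. split; lra.
    - split. nra. rewrite V_SS.
      assert (al = mu + lam) by (unfold mu, lam; lra).
      assert (al * V al be p (S n) + be * V al be p n - mu * V al be p (S n)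
              = lam * (V al be p (S n) - mu * V al be p n)) by nra.
      nra. }
  intro n; apply I.
Qed.

Lemma V_escape al be p : be < 0 ->
  ~ (0 < al /\ 0 <= al^2 + 4*be /\ (al <= 2*p \/ p^2 - al*p - be <= 0)) ->
  exists n, V al be p n <= 0.
Proof.
  intros hbe hn.
  apply NNPP; intro hall.
  assert (hpos : forall n, 0 < V al be p n).
  { intro n. apply Rnot_le_lt. intro h. apply hall. exists n. exact h. }
  assert (hp : 0 < p) by (exact (hpos 1%nat)).
  assert (hdel : exists del, 0 < del /\ forall r, 0 < r -> r <= p -> del <= r^2 - al*r - be).
  { destruct (Rle_dec al 0) as [h1|h1].
    { exists (-be). split. lra. intros r hr _. nra. }
    destruct (Rlt_dec (al^2+4*be) 0) as [h2|h2].
    { exists (-(al^2+4*be)/4). split. lra. intros r _ _. pose proof (pow2_ge_0 (r - al/2)). nra. }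
    assert (h3 : ~ (al <= 2*p \/ p^2 - al*p - be <= 0)) by (intro; apply hn; repeat split; lra).
    assert (2*p < al) by (apply Rnot_le_lt; intro; apply h3; left; lra).
    assert (0 < p^2 - al*p - be) by (apply Rnot_le_lt; intro; apply h3; right; lra).
    exists (p^2 - al*p - be). split. lra. intros r hr hrp. nra. }
  destruct hdel as [del [hdel hr]].
  set (r := fun n => V al be p (S n) / V al be p n).
  assert (rpos : forall n, 0 < r n).
  { intro n. unfold r. apply Rdiv_lt_0_compat; apply hpos. }
  assert (rb : forall n, r n <= p - INR n * del / p).
  { induction n as [|n IH].
    - unfold r. simpl. unfold Rdiv. lra.
    - assert (hrn : r n <= p).
      { assert (0 <= INR n * del / p). { unfold Rdiv. apply Rmult_le_pos. apply Rmult_le_pos. apply pos_INR. lra. left; apply Rinv_0_lt_compat; lra. } lra. }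
      assert (hh := hr (r n) (rpos n) hrn).
      assert (eq : r (S n) * r n = al * r n + be).
      { unfold r. rewrite V_SS. field. split; apply Rgt_not_eq, hpos. }
      assert (r (S n) <= r n - del / r n).
      { assert (hr0 := rpos n). apply (Rmult_le_reg_r (r n)); auto.
        unfold Rdiv. rewrite Rmult_minus_distr_r, Rmult_assoc, Rinv_l by lra. nra. }
      assert (del / p <= del / r n).
      { unfold Rdiv. apply Rmult_le_compat_l. lra. apply Rinv_le_contravar; auto. }
      rewrite S_INR. unfold Rdiv in *. lra. }
  destruct (INR_archimed (del/p) p) as [n hn']. apply Rdiv_lt_0_compat; lra.
  specialize (rb n). specialize (rpos n). unfold Rdiv in *. lra.
Qed.



Fixpoint peval (cs : list R) (z : R) : R :=
  match cs with [] => 0 | c :: cs' => c + z * peval cs' z end.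

Fixpoint padd (p q : list R) : list R :=
  match p, q with
  | [], q => q
  | p, [] => p
  | x :: p', y :: q' => (x + y) :: padd p' q'
  end.

Lemma padd_eval p q z : peval (padd p q) z = peval p z + peval q z.
Proof.
  revert q; induction p as [|x p IH]; intros [|y q]; simpl; try ring.
  rewrite IH. ring.
Qed.

Lemma padd_len p q : length (padd p q) = Nat.max (length p) (length q).
Proof.
  revert q; induction p as [|x p IH]; intros [|y q]; simpl; try lia.
  rewrite IH. lia.
Qed.

Definition pscale (k : R) (p : list R) := map (fun x => k * x) p.

Lemma pscale_eval k p z : peval (pscale k p) z = k * peval p z.
Proof. induction p as [|x p IH]; simpl; [ring|]. rewrite IH; ring. Qed.

Lemma pscale_len k p : length (pscale k p) = length p.
Proof. apply length_map. Qed.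

Definition plin (a b : R) (p : list R) := padd (pscale b p) (0 :: pscale a p).

Lemma plin_eval a b p z : peval (plin a b p) z = (a*z+b) * peval p z.
Proof. unfold plin. rewrite padd_eval. simpl. rewrite !pscale_eval. ring. Qed.

Lemma plin_len a b p : length (plin a b p) = S (length p).
Proof. unfold plin. rewrite padd_len. simpl. rewrite !pscale_len. lia. Qed.

Fixpoint Wc (a b c d : R) (n : nat) : list R :=
  match n with
  | O => [1]
  | S m => match m with
           | O => [0; 1]
           | S k => padd (plin a b (Wc a b c d m)) (plin c d (Wc a b c d k))
           end
  end.

Lemma Wc_spec a b c d m : (forall z, peval (Wc a b c d m) z = W a b c d m z) /\
   length (Wc a b c d m) = S m.
Proof.
  assert (H : forall n, ((forall z, peval (Wc a b c d n) z = W a b c d n z) /\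
   length (Wc a b c d n) = S n) /\ ((forall z, peval (Wc a b c d (S n)) z = W a b c d (S n) z) /\
   length (Wc a b c d (S n)) = S (S n))).
  { induction n as [|n [[H1 H2] [H3 H4]]].
    - split; split; try reflexivity; intro z; simpl; ring.
    - split; [split; assumption|]. split.
      + intro z. change (Wc a b c d (S (S n))) with
          (padd (plin a b (Wc a b c d (S n))) (plin c d (Wc a b c d n))).
        rewrite padd_eval, !plin_eval, H1, H3. reflexivity.
      + change (Wc a b c d (S (S n))) with
          (padd (plin a b (Wc a b c d (S n))) (plin c d (Wc a b c d n))).
        rewrite padd_len, !plin_len, H2, H4. lia. }
  apply H.
Qed.

Fixpoint pdiv (cs : list R) (r : R) : list R :=
  match cs with
  | [] => []
  | c :: cs' => match cs' with [] => [] | _ => peval cs' r :: pdiv cs' r end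
  end.

Lemma pdiv_spec cs r z : peval cs z = (z - r) * peval (pdiv cs r) z + peval cs r.
Proof.
  induction cs as [|c cs IH]; simpl; [ring|].
  destruct cs as [|c' cs'].
  - simpl; ring.
  - simpl peval at 2. rewrite IH. simpl. ring.
Qed.

Lemma pdiv_len cs r : length (pdiv cs r) = pred (length cs).
Proof.
  induction cs as [|c cs IH]; simpl; auto.
  destruct cs as [|c' cs']; simpl; auto.
Qed.

Lemma factor : forall rs cs, NoDup rs -> (forall r, In r rs -> peval cs r = 0) ->
  length cs = S (length rs) -> exists k, forall z, peval cs z = k * prod_lin rs z.
Proof.
  induction rs as [|r rs IH]; intros cs hnd hr hl.
  - destruct cs as [|k [|]]; simpl in hl; try lia.
    exists k. intro z. simpl. ring.
  - inversion hnd; subst.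
    destruct (IH (pdiv cs r)) as [k hk]; auto.
    + intros r' hr'. assert (e := pdiv_spec cs r r').
      rewrite (hr r') in e by (right; auto). rewrite (hr r) in e by (left; auto).
      assert (r' - r <> 0) by (intro; apply H1; replace r with r' by lra; auto).
      apply (Rmult_eq_reg_l (r' - r)); auto. lra.
    + rewrite pdiv_len, hl. simpl in *. lia.
    + exists k. intro z. rewrite pdiv_spec with (r := r), hk, (hr r) by (left; auto).
      simpl. ring.
Qed.

Lemma W_factor a b c d n rs : NoDup rs -> (forall r, In r rs -> W a b c d n r = 0) ->
  length rs = n -> exists k, forall z, W a b c d n z = k * prod_lin rs z.
Proof.
  intros h1 h2 h3. destruct (Wc_spec a b c d n) as [he hl].
  destruct (factor rs (Wc a b c d n)) as [k hk]; auto.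
  - intros r hr. rewrite he. auto.
  - lia.
  - exists k. intro z. rewrite <- he. auto.
Qed.

Lemma W_cont a b c d n : continuity (W a b c d n).
Proof.
  assert (H : forall cs, continuity (peval cs)).
  { induction cs as [|x cs IH]; simpl.
    - apply continuity_const. intros ? ?; reflexivity.
    - apply continuity_plus. apply continuity_const. intros ? ?; reflexivity.
      apply continuity_mult. apply derivable_continuous, derivable_id. exact IH. }
  destruct (Wc_spec a b c d n) as [he _].
  intros x. specialize (H (Wc a b c d n) x).
  unfold continuity_pt, continue_in, limit1_in, limit_in in *.
  intros e he'. destruct (H e he') as [al [h1 h2]]. exists al. split; auto.
  intros y hy. rewrite <- !he. auto.
Qed.



Lemma In_interleave x xs ys : In x (interleave xs ys) <-> In x xs \/ In x ys.
Proof.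
  revert ys; induction xs as [|x0 xs IH]; intros [|y ys]; simpl; try tauto.
  rewrite IH. tauto.
Qed.

Lemma SS_inter_l xs ys : StronglySorted Rlt (interleave xs ys) -> StronglySorted Rlt xs.
Proof.
  revert ys; induction xs as [|x xs IH]; intros [|y ys] h; simpl in *; auto.
  - constructor.
  - apply StronglySorted_inv in h as [h1 h2]. apply StronglySorted_inv in h1 as [h3 h4].
    constructor. eapply IH; eauto.
    rewrite Forall_forall in *. intros w hw. apply h2. right. apply In_interleave. auto.
Qed.

Lemma SS_inter_r xs ys : StronglySorted Rlt (interleave xs ys) -> StronglySorted Rlt ys.
Proof.
  revert ys; induction xs as [|x xs IH]; intros [|y ys] h; simpl in *; auto.
  - constructor.
  - apply StronglySorted_inv in h as [h1 h2]. apply StronglySorted_inv in h1 as [h3 h4].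
    constructor. eapply IH; eauto.
    rewrite Forall_forall in *. intros w hw. apply h4. apply In_interleave. auto.
Qed.

Lemma SS_NoDup l : StronglySorted Rlt l -> NoDup l.
Proof.
  induction l as [|x l IH]; intro h; constructor.
  - apply StronglySorted_inv in h as [_ h]. rewrite Forall_forall in h.
    intro hx. specialize (h x hx). lra.
  - apply IH. apply StronglySorted_inv in h; tauto.
Qed.

Lemma prod_lin_zero rs z : prod_lin rs z = 0 <-> In z rs.
Proof.
  induction rs as [|r rs IH]; simpl.
  - split; [lra|tauto].
  - split.
    + intro h. apply Rmult_integral in h as [h|h]. left; lra. right; tauto.
    + intros [h|h]. subst; ring. apply IH in h. rewrite h; ring.
Qed.

Lemma prod_pos rs z : (forall r, In r rs -> r < z) -> 0 < prod_lin rs z.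
Proof.
  induction rs as [|r rs IH]; simpl; intro h. lra.
  assert (r < z) by auto. assert (0 < prod_lin rs z) by auto. nra.
Qed.

Lemma prod_left rs z : (forall r, In r rs -> z < r) -> 0 < (-1)^(length rs) * prod_lin rs z.
Proof.
  induction rs as [|r rs IH]; simpl; intro h. lra.
  assert (z < r) by auto. assert (0 < (-1)^(length rs) * prod_lin rs z) by auto. nra.
Qed.

Fixpoint Alt (f : R -> R) (s : R) (l : list R) : Prop :=
  match l with [] => True | x :: l' => 0 < s * f x /\ Alt f (-s) l' end.

Lemma Alt_imp f g l : (forall y s, In y l -> 0 < s * g y -> 0 < s * f y) ->
  forall s, Alt g s l -> Alt f s l.
Proof.
  induction l as [|x l IH]; simpl; auto.
  intros h s [h1 h2]. split; eauto.
Qed.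

Lemma Alt_snoc f l r : forall s, Alt f s l -> 0 < s * (-1)^(length l) * f r -> Alt f s (l ++ [r]).
Proof.
  induction l as [|x l IH]; simpl; intros s h hr.
  - split; auto. lra.
  - destruct h as [h1 h2]. split; auto. apply IH; auto.
    replace (- s * (-1) ^ length l * f r) with (s * (-1 * (-1) ^ length l) * f r) by ring. auto.
Qed.

Lemma alt_prod : forall xs ys, StronglySorted Rlt (interleave ys xs) ->
  length ys = S (length xs) -> Alt (prod_lin xs) ((-1)^(length xs)) ys.
Proof.
  induction xs as [|x xs IH]; intros ys h hl.
  - destruct ys as [|y [|]]; simpl in hl; try lia. simpl. lra.
  - destruct ys as [|y ys]; simpl in hl; try lia.
    simpl in h. apply StronglySorted_inv in h as [h1 h2].
    apply StronglySorted_inv in h1 as [h3 h4].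
    rewrite Forall_forall in h2, h4.
    simpl. split.
    + assert (y < x) by (apply h2; left; auto).
      assert (0 < (-1)^(length xs) * prod_lin xs y).
      { apply prod_left. intros r hr. apply h2. right. apply In_interleave. auto. }
      nra.
    + apply (Alt_imp _ (prod_lin xs)).
      * intros w s hw hs. assert (x < w) by (apply h4; apply In_interleave; auto). simpl. nra.
      * replace (- (-1 * (-1) ^ length xs)) with ((-1)^length xs) by ring.
        apply IH; auto.
Qed.

Lemma ivt_strict f l r : continuity f -> l < r -> f l * f r < 0 -> exists z, l < z < r /\ f z = 0.
Proof.
  intros hc hlr hs. destruct (IVT_cor f l r hc) as [z [hz1 hz2]]; try lra.
  exists z. split; auto. destruct hz1 as [h1 h2]. split.
  - destruct h1 as [h1|h1]; auto. subst. rewrite hz2 in hs. lra.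
  - destruct h2 as [h2|h2]; auto. subst. rewrite hz2 in hs. lra.
Qed.

Lemma ivt_chain f r : continuity f -> forall ys l s,
  StronglySorted Rlt ys -> (forall y, In y ys -> l < y < r) -> l < r ->
  Alt f s (l :: ys ++ [r]) ->
  exists zs, length zs = S (length ys) /\ (forall z, In z zs -> f z = 0 /\ l < z < r) /\
    StronglySorted Rlt (interleave zs ys).
Proof.
  intros hc ys. induction ys as [|y ys IH]; intros l s hs hy hlr halt.
  - simpl in halt. destruct halt as [h1 [h2 _]].
    destruct (ivt_strict f l r hc hlr) as [z [hz1 hz2]]. nra.
    exists [z]. split; auto. split.
    + intros w [hw|[]]. subst. auto.
    + simpl. constructor; constructor.
  - simpl in halt. destruct halt as [h1 [h2 h3]].
    assert (hyl : l < y < r) by (apply hy; left; auto).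
    destruct (ivt_strict f l y hc) as [z0 [hz1 hz2]]; try lra. nra.
    apply StronglySorted_inv in hs as [hs1 hs2]. rewrite Forall_forall in hs2.
    destruct (IH y (-s) hs1) as [zs [hl [hz hss]]]; try tauto.
    + intros w hw. split. apply hs2; auto. apply hy; right; auto.
    + simpl. split; auto.
    + exists (z0 :: zs). split; [simpl; lia|]. split.
      * intros w [hw|hw]. subst. split; auto; lra. destruct (hz w hw). split; auto. lra.
      * simpl. constructor. constructor. auto.
        -- rewrite Forall_forall. intros w hw. apply In_interleave in hw as [hw|hw].
           destruct (hz w hw); lra. apply hs2; auto.
        -- rewrite Forall_forall. intros w [hw|hw]. subst; lra.
           apply In_interleave in hw as [hw|hw].
           destruct (hz w hw); lra. specialize (hs2 w hw). lra.
Qed.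

Lemma inter_gt : forall xs ys x, StronglySorted Rlt (interleave ys xs) ->
  length ys = S (length xs) -> In x xs -> exists y, In y ys /\ x < y.
Proof.
  induction xs as [|x0 xs IH]; intros ys x h hl hx; [destruct hx|].
  destruct ys as [|y ys]; simpl in hl; try lia.
  simpl in h. apply StronglySorted_inv in h as [h1 h2].
  apply StronglySorted_inv in h1 as [h3 h4]. rewrite Forall_forall in h4.
  destruct hx as [hx|hx].
  - subst. destruct ys as [|y' ys']; simpl in hl; try lia.
    exists y'. split. right; left; auto. apply h4. apply In_interleave. left; left; auto.
  - destruct (IH ys x h3) as [w [hw1 hw2]]; auto. exists w; split; auto. right; auto.
Qed.

Lemma inter_lt : forall xs ys x, StronglySorted Rlt (interleave ys xs) ->
  length ys = S (length xs) -> In x xs -> exists y, In y ys /\ y < x.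
Proof.
  induction xs as [|x0 xs IH]; intros ys x h hl hx; [destruct hx|].
  destruct ys as [|y ys]; simpl in hl; try lia.
  simpl in h. apply StronglySorted_inv in h as [h1 h2].
  apply StronglySorted_inv in h1 as [h3 h4]. rewrite Forall_forall in h2.
  destruct hx as [hx|hx].
  - subst. exists y. split. left; auto. apply h2. left; auto.
  - destruct (IH ys x h3) as [w [hw1 hw2]]; auto. exists w; split; auto. right; auto.
Qed.



Definition Hy (a b c d : R) := 0 < a /\ 0 < c /\ b < 0 /\ d < 0 /\ xA a b < xB c d.
Definition phi a b z := (2-a)*z - b.
Definition gq a b c d z := (1-a)*z^2 - (b+c)*z - d.
Definition Dl a b c d z := (a*z+b)^2 + 4*(c*z+d).

Lemma basics a b c d : Hy a b c d ->
  0 < xA a b /\ 0 < xB c d /\ c * xA a b + d < 0 /\ c^2 < DeltaDelta a b c d /\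
  a * xA a b + b = 0 /\ c * xB c d + d = 0.
Proof.
  intros (ha & hc & hb & hd & hab). unfold xA, xB, DeltaDelta, Bfun in *.
  assert (0 < -b/a) by (unfold Rdiv; apply Rmult_lt_0_compat; [lra|apply Rinv_0_lt_compat; lra]).
  assert (0 < -d/c) by (unfold Rdiv; apply Rmult_lt_0_compat; [lra|apply Rinv_0_lt_compat; lra]).
  assert (c * (-b/a) < c * (-d/c)) by (apply Rmult_lt_compat_l; lra).
  assert (e : c * (-d/c) = -d) by (field; lra).
  assert (e2 : a * (-b/a) + b = 0) by (field; lra).
  assert (0 < a^2) by nra.
  repeat split; try lra.
  - assert (0 < a^2 * -(c * (-b/a) + d)) by (apply Rmult_lt_0_compat; lra). unfold xA. lra.
Qed.

Lemma Dl_fact a b c d z : Hy a b c d ->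
  Dl a b c d z = a^2 * (z - xDelta_minus a b c d) * (z - xDelta_plus a b c d).
Proof.
  intros H. assert (ha : 0 < a) by apply H.
  destruct (basics a b c d H) as (_&_&_&hDD&_).
  unfold xDelta_minus, xDelta_plus.
  set (s := sqrt (DeltaDelta a b c d)).
  assert (hs : s * s = DeltaDelta a b c d) by (apply sqrt_sqrt; nra).
  unfold DeltaDelta, Bfun, xA in hs.
  unfold Dl, xA.
  replace (a ^ 2 * (z - (- b / a + (-2 * c - 2 * s) / a ^ 2)) *
     (z - (- b / a + (-2 * c + 2 * s) / a ^ 2))) with
    ((a*z+b)^2 + 4*c*z + 4*b*c/a + 4 * (c^2 - s*s) / a^2) by (field; lra).
  rewrite hs. field. lra.
Qed.

Lemma xm_xp a b c d : Hy a b c d ->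
  xDelta_minus a b c d < xA a b < xDelta_plus a b c d.
Proof.
  intros H. assert (ha : 0 < a) by apply H. assert (hc : 0 < c) by apply H.
  destruct (basics a b c d H) as (_&_&_&hDD&_).
  unfold xDelta_minus, xDelta_plus.
  set (s := sqrt (DeltaDelta a b c d)).
  assert (hs : s * s = DeltaDelta a b c d) by (apply sqrt_sqrt; nra).
  assert (hs0 : 0 <= s) by apply sqrt_pos.
  assert (c < s) by nra.
  assert (0 < a^2) by nra.
  assert (0 < / a^2) by (apply Rinv_0_lt_compat; lra).
  unfold Rdiv. split; nra.
Qed.

Lemma Dl_phi a b c d z : Dl a b c d z = (phi a b z)^2 - 4 * gq a b c d z.
Proof. unfold Dl, phi, gq. ring. Qed.

Lemma quad_lt r1 r2 z : r1 < r2 -> ((z-r1)*(z-r2) < 0 <-> r1 < z < r2).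
Proof.
  intro h. split.
  - intro hz. split; apply Rnot_le_lt; intro hh; [assert (z - r1 <= 0) by lra; assert (z-r2 < 0) by lra|
     assert (0 <= z - r2) by lra; assert (0 < z - r1) by lra]; nra.
  - intros [h1 h2]. assert (0 < z - r1) by lra. assert (z - r2 < 0) by lra. nra.
Qed.

Lemma quad_le r1 r2 z : r1 < r2 -> ((z-r1)*(z-r2) <= 0 <-> r1 <= z <= r2).
Proof.
  intro h. split.
  - intro hz. split; apply Rnot_lt_le; intro hh; [assert (z - r1 < 0) by lra; assert (z-r2 < 0) by lra|
     assert (0 < z - r2) by lra; assert (0 < z - r1) by lra]; nra.
  - intros [h1 h2]. assert (0 <= z - r1) by lra. assert (z - r2 <= 0) by lra. nra.
Qed.

Lemma kpos_lt k t : 0 < k -> (k * t < 0 <-> t < 0).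
Proof. intro h. split; intro. apply Rnot_le_lt; intro; nra. nra. Qed.
Lemma kpos_le k t : 0 < k -> (k * t <= 0 <-> t <= 0).
Proof. intro h. split; intro. apply Rnot_lt_le; intro; nra. nra. Qed.

Lemma g_concave a b c d w : 1 < a -> 0 < gq a b c d w ->
  xg_minus a b c d < xg_plus a b c d /\
  forall z, gq a b c d z = (1-a) * (z - xg_minus a b c d) * (z - xg_plus a b c d).
Proof.
  intros ha hw.
  assert (hD : 0 < Deltag a b c d).
  { assert (4*(1-a)*gq a b c d w = (2*(1-a)*w - (b+c))^2 - Deltag a b c d)
      by (unfold gq, Deltag; ring).
    assert (0 < (a-1)*gq a b c d w) by (apply Rmult_lt_0_compat; lra).
    pose proof (pow2_ge_0 (2*(1-a)*w - (b+c))). lra. }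
  unfold xg_minus, xg_plus. destruct (Req_EM_T a 1) as [e|_]; [lra|].
  rewrite Rabs_left by lra.
  set (sg := sqrt (Deltag a b c d)).
  assert (hs : sg * sg = Deltag a b c d) by (apply sqrt_sqrt; lra).
  assert (hs0 : 0 < sg) by (apply sqrt_lt_R0; lra).
  split.
  - assert (0 < sg / (2 * - (1-a))) by (apply Rdiv_lt_0_compat; lra). lra.
  - intro z. unfold gq. unfold Deltag in hs.
    replace ((1 - a) * (z - ((b + c) / (2 * (1 - a)) - sg / (2 * - (1 - a)))) *
      (z - ((b + c) / (2 * (1 - a)) + sg / (2 * - (1 - a)))))
      with ((1-a)*z^2 - (b+c)*z + ((b+c)^2 - sg*sg)/(4*(1-a))) by (field; lra).
    rewrite hs. field. lra.
Qed.

Lemma g_convex a b c d w : a < 1 -> gq a b c d w < 0 ->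
  exists r1, r1 < xg_plus a b c d /\
  forall z, gq a b c d z = (1-a) * (z - r1) * (z - xg_plus a b c d).
Proof.
  intros ha hw.
  assert (hD : 0 < Deltag a b c d).
  { assert (4*(1-a)*gq a b c d w = (2*(1-a)*w - (b+c))^2 - Deltag a b c d)
      by (unfold gq, Deltag; ring).
    assert (0 < (1-a)*(- gq a b c d w)) by (apply Rmult_lt_0_compat; lra).
    pose proof (pow2_ge_0 (2*(1-a)*w - (b+c))). lra. }
  unfold xg_plus. destruct (Req_EM_T a 1) as [e|_]; [lra|].
  rewrite Rabs_right by lra.
  set (sg := sqrt (Deltag a b c d)).
  assert (hs : sg * sg = Deltag a b c d) by (apply sqrt_sqrt; lra).
  assert (hs0 : 0 < sg) by (apply sqrt_lt_R0; lra).
  exists ((b + c) / (2 * (1 - a)) - sg / (2 * (1 - a))). split.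
  - assert (0 < sg / (2 * (1-a))) by (apply Rdiv_lt_0_compat; lra). lra.
  - intro z. unfold gq. unfold Deltag in hs.
    replace ((1 - a) * (z - ((b + c) / (2 * (1 - a)) - sg / (2 * (1 - a)))) *
      (z - ((b + c) / (2 * (1 - a)) + sg / (2 * (1 - a)))))
      with ((1-a)*z^2 - (b+c)*z + ((b+c)^2 - sg*sg)/(4*(1-a))) by (field; lra).
    rewrite hs. field. lra.
Qed.

Lemma g_concave_sign a b c d w : 1 < a -> 0 < gq a b c d w ->
  xg_minus a b c d < xg_plus a b c d /\
  forall z, (0 < gq a b c d z <-> xg_minus a b c d < z < xg_plus a b c d) /\
            (gq a b c d z <= 0 <-> z <= xg_minus a b c d \/ xg_plus a b c d <= z).
Proof.
  intros ha hw. destruct (g_concave a b c d w ha hw) as [hr hg]. split; auto.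
  intro z. rewrite hg.
  replace ((1 - a) * (z - xg_minus a b c d) * (z - xg_plus a b c d)) with
    ((a-1) * (-((z - xg_minus a b c d) * (z - xg_plus a b c d)))) by ring.
  split.
  - rewrite <- (quad_lt _ _ z hr). split; intro h; nra.
  - assert (e := quad_lt _ _ z hr). split; intro h.
    + destruct (Rlt_dec (xg_minus a b c d) z); destruct (Rlt_dec z (xg_plus a b c d)); try lra.
      assert ((z - xg_minus a b c d) * (z - xg_plus a b c d) < 0) by (apply e; lra). nra.
    + destruct h as [h|h].
      * assert (0 <= (z - xg_minus a b c d) * (z - xg_plus a b c d)).
        { assert (z - xg_minus a b c d <= 0) by lra. assert (z - xg_plus a b c d < 0) by lra. nra. }
        nra.
      * assert (0 <= (z - xg_minus a b c d) * (z - xg_plus a b c d)).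
        { assert (0 < z - xg_minus a b c d) by lra. assert (0 <= z - xg_plus a b c d) by lra. nra. }
        nra.
Qed.

Lemma g_convex_sign a b c d w : a < 1 -> gq a b c d w < 0 ->
  exists r1, r1 < xg_plus a b c d /\
  forall z, (gq a b c d z < 0 <-> r1 < z < xg_plus a b c d) /\
            (gq a b c d z <= 0 <-> r1 <= z <= xg_plus a b c d).
Proof.
  intros ha hw. destruct (g_convex a b c d w ha hw) as [r1 [hr hg]]. exists r1. split; auto.
  intro z. rewrite hg. rewrite Rmult_assoc.
  rewrite kpos_lt, kpos_le by lra. split; [apply quad_lt|apply quad_le]; auto.
Qed.

Lemma F_z0 a b c d : Hy a b c d -> a <> 2 ->
  (2-a)^2 * Dl a b c d (b/(2-a)) = 4 * Ffun a b c d.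
Proof.
  intros H h2. assert (ha : 0 < a) by apply H.
  unfold Dl, Ffun, Deltag, DeltaDelta, Bfun, xA.
  assert (2 - a <> 0) by lra. field. lra.
Qed.

Definition LC a b c d z := z <= xDelta_minus a b c d /\ (phi a b z <= 0 \/ gq a b c d z <= 0).
Definition RC a b c d z := xDelta_plus a b c d <= z /\ (0 <= phi a b z \/ gq a b c d z <= 0).

Lemma SA_L a b c d : Hy a b c d -> forall z, z <= fst (uv a b c d) <-> LC a b c d z.
Proof.
  intros H. assert (H' := H). destruct H' as (ha & hc & hb & hd & hab).
  destruct (basics a b c d H) as (hxA & hxB & hBA & hDD & hAA & hBB).
  pose proof (xm_xp a b c d H) as hmp.
  pose proof (Dl_fact a b c d) as hDf.
  pose proof (Dl_phi a b c d) as hDp.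
  set (xm := xDelta_minus a b c d) in *. set (xp := xDelta_plus a b c d) in *.
  assert (hDm : Dl a b c d xm = 0) by (rewrite (hDf xm H); ring).
  assert (hgm : gq a b c d xm = (phi a b xm)^2/4) by (rewrite hDp in hDm; lra).
  assert (ha2 : 0 < a^2) by nra.
  unfold LC. fold xm.
  unfold uv. destruct (Rlt_dec a 2) as [h2|h2].
  - set (z0 := b/(2-a)).
    assert (hF := F_z0 a b c d H ltac:(lra)). fold z0 in hF.
    assert (hph : forall z, phi a b z = (2-a)*(z - z0)) by (intro; unfold phi, z0; field; lra).
    assert (hz0 : z0 < 0) by (unfold z0, Rdiv; assert (0 < /(2-a)) by (apply Rinv_0_lt_compat; lra); nra).
    assert (hgz0 : gq a b c d z0 = - Dl a b c d z0 / 4) by (rewrite hDp, hph; replace (z0 - z0) with 0 by ring; field).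
    assert (hD0 := hDf z0 H). fold xm xp in hD0.
    assert (h2a : 0 < (2-a)^2) by nra.
    destruct (Rle_dec (Ffun a b c d) 0) as [hF0|hF0].
    + simpl. fold xm.
      assert (xm <= z0).
      { destruct (Rle_dec xm z0) as [?|hh]; auto. exfalso.
        assert (Dl a b c d z0 <= 0) by nra. 
        assert (0 < (z0 - xm) * (z0 - xp)) by nra. nra. }
      intro z; split; [intro hz; split; [auto|left; rewrite hph; nra] | tauto].
    + assert (hDz : 0 < Dl a b c d z0) by nra.
      assert (hz0m : z0 < xm).
      { destruct (Rlt_dec z0 xm) as [?|hh]; auto. exfalso.
        assert (z0 < xp) by lra. assert ((z0-xm)*(z0-xp) <= 0) by nra.
        assert (a^2 * ((z0-xm)*(z0-xp)) <= 0) by nra. nra. }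
      assert (hphm : 0 < phi a b xm) by (rewrite hph; nra).
      assert (hgm0 : 0 < gq a b c d xm) by nra.
      assert (hg0 : gq a b c d z0 < 0) by lra.
      destruct (Rlt_dec a 1) as [h1|h1].
      * simpl. destruct (g_convex_sign a b c d z0 h1 hg0) as [r1 [hr hg]].
        set (r2 := xg_plus a b c d) in *.
        assert (hr1 : r1 < z0 < r2) by (apply hg; auto).
        assert (hr2 : r2 < xm).
        { destruct (Rlt_dec r2 xm) as [?|hh]; auto. exfalso.
          assert (gq a b c d xm <= 0) by (apply hg; lra). lra. }
        intro z; split.
        -- intro hz. split. lra. destruct (Rle_dec z z0). left; rewrite hph; nra.
           right. apply hg. lra.
        -- intros [hz [hp|hp]]; destruct (Rle_dec z r2) as [?|hh]; auto; exfalso.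
           rewrite hph in hp; nra. apply hg in hp; lra.
      * simpl. destruct (Req_dec a 1) as [e1|e1].
        -- assert (hxg : xg_minus a b c d = - d / (b+c)) by
             (unfold xg_minus; destruct (Req_EM_T a 1); [auto|contradiction]).
           rewrite hxg. subst a.
           assert (hgl : forall z, gq 1 b c d z = -(b+c)*z - d) by (intro; unfold gq; ring).
           rewrite hgl in hgm0, hg0.
           assert (hbc : b + c < 0) by nra.
           set (r := -d/(b+c)).
           assert (hgr : forall z, -(b+c)*z - d = -(b+c)*(z - r)) by (intro; unfold r; field; lra).
           rewrite hgr in hgm0, hg0.
           intro z; split.
           ++ intro hz. split. nra. right. rewrite hgl, hgr. nra.
           ++ intros [hz [hp|hp]]; destruct (Rle_dec z r) as [?|hh]; auto; exfalso.
              rewrite hph in hp; nra. rewrite hgl, hgr in hp; nra.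
        -- assert (h1' : 1 < a) by lra.
           destruct (g_concave_sign a b c d xm h1' hgm0) as [hr hg].
           set (r1 := xg_minus a b c d) in *. set (r2 := xg_plus a b c d) in *.
           assert (hr1 : r1 < xm < r2) by (apply hg; auto).
           assert (hz1 : z0 <= r1).
           { assert (z0 <= r1 \/ r2 <= z0) by (apply hg; lra). lra. }
           intro z; split.
           ++ intro hz. split. lra. right. apply hg. lra.
           ++ intros [hz [hp|hp]]; destruct (Rle_dec z r1) as [?|hh]; auto; exfalso.
              rewrite hph in hp; nra. assert (0 < gq a b c d z) by (apply hg; lra). lra.
  - assert (hphi : forall z, z < xA a b -> 0 < phi a b z).
    { intros z hz. unfold phi. nra. }
    assert (hphm : 0 < phi a b xm) by (apply hphi; lra).
    assert (hgm0 : 0 < gq a b c d xm) by nra.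
    assert (h1' : 1 < a) by lra.
    destruct (g_concave_sign a b c d xm h1' hgm0) as [hr hg].
    set (r1 := xg_minus a b c d) in *. set (r2 := xg_plus a b c d) in *.
    assert (hr1 : r1 < xm < r2) by (apply hg; auto).
    assert (G : forall z, z <= r1 <-> z <= xm /\ (phi a b z <= 0 \/ gq a b c d z <= 0)).
    { intro z; split.
      + intro hz. split. lra. right. apply hg. lra.
      + intros [hz [hp|hp]]; destruct (Rle_dec z r1) as [?|hh]; auto; exfalso.
        assert (0 < phi a b z) by (apply hphi; lra). lra.
        assert (0 < gq a b c d z) by (apply hg; lra). lra. }
    destruct (Rlt_dec 2 a); [destruct (Rlt_dec (Ffun a b c d) 0)|]; simpl; exact G.
Qed.

Lemma Ffun_eq a b c d : a <> 0 -> Ffun a b c d = d*(a-2)^2 + b*c*(2-a) + b^2.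
Proof. intro h. unfold Ffun, Deltag, DeltaDelta, Bfun, xA. field. auto. Qed.

Lemma SA_R a b c d : Hy a b c d ->
  xDelta_plus a b c d < xB c d /\ snd (uv a b c d) < xB c d /\
  forall z, z < xB c d -> (snd (uv a b c d) <= z <-> RC a b c d z).
Proof.
  intros H. assert (H' := H). destruct H' as (ha & hc & hb & hd & hab).
  destruct (basics a b c d H) as (hxA & hxB & hBA & hDD & hAA & hBB).
  pose proof (xm_xp a b c d H) as hmp.
  pose proof (Dl_fact a b c d) as hDf.
  pose proof (Dl_phi a b c d) as hDp.
  set (xm := xDelta_minus a b c d) in *. set (xp := xDelta_plus a b c d) in *.
  assert (hDm : Dl a b c d xp = 0) by (rewrite (hDf xp H); ring).
  assert (hgp : gq a b c d xp = (phi a b xp)^2/4) by (rewrite hDp in hDm; lra).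
  assert (ha2 : 0 < a^2) by nra.
  assert (hpB : xp < xB c d).
  { assert (e := hDf (xB c d) H). fold xm xp in e. unfold Dl in e.
    replace (c * xB c d + d) with 0 in e by lra.
    assert (0 < a * xB c d + b) by nra.
    destruct (Rlt_dec xp (xB c d)) as [?|hh]; auto. exfalso.
    assert (0 < xB c d - xm) by lra. assert (xB c d - xp <= 0) by lra.
    assert ((xB c d - xm) * (xB c d - xp) <= 0) by nra.
    assert (a^2 * ((xB c d - xm) * (xB c d - xp)) <= 0) by nra. nra. }
  split; auto.
  unfold RC. fold xp.
  assert (Gle : a <= 2 -> forall z, z < xB c d -> (xp <= z <-> xp <= z /\ (0 <= phi a b z \/ gq a b c d z <= 0))).
  { intros h2 z hz. split; [|tauto]. intro h. split; auto. left. unfold phi. nra. }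
  unfold uv. destruct (Rlt_dec a 2) as [h2|h2].
  - assert (G := Gle ltac:(lra)).
    destruct (Rle_dec (Ffun a b c d) 0); [|destruct (Rlt_dec a 1)]; simpl; split; auto.
  - destruct (Rlt_dec 2 a) as [h2'|h2'].
    2: { simpl. split; auto. apply Gle. lra. }
    set (z0 := b/(2-a)).
    assert (hF := F_z0 a b c d H ltac:(lra)). fold z0 in hF.
    assert (hph : forall z, phi a b z = (2-a)*(z - z0)) by (intro; unfold phi, z0; field; lra).
    assert (hz0 : xA a b < z0).
    { unfold z0, xA. apply Rminus_gt_0_lt. replace (b / (2 - a) - - b / a) with ((-b) * 2 / (a*(a-2))) by (field; lra).
      apply Rdiv_lt_0_compat; nra. }
    assert (hgz0 : gq a b c d z0 = - Dl a b c d z0 / 4) by (rewrite hDp, hph; replace (z0 - z0) with 0 by ring; field).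
    assert (hD0 := hDf z0 H). fold xm xp in hD0.
    assert (h2a : 0 < (2-a)^2) by nra.
    destruct (Rlt_dec (Ffun a b c d) 0) as [hF0|hF0]; simpl.
    + assert (hDz : Dl a b c d z0 < 0) by nra.
      assert (hz0p : z0 < xp).
      { destruct (Rlt_dec z0 xp) as [?|hh]; auto. exfalso.
        assert (0 < z0 - xm) by lra. assert (0 <= z0 - xp) by lra.
        assert (0 <= (z0 - xm) * (z0 - xp)) by nra.
        assert (0 <= a^2 * ((z0 - xm) * (z0 - xp))) by nra. nra. }
      assert (hphp : phi a b xp < 0) by (rewrite hph; nra).
      assert (hgp0 : 0 < gq a b c d xp) by nra.
      assert (h1' : 1 < a) by lra.
      destruct (g_concave_sign a b c d xp h1' hgp0) as [hr hg].
      destruct (g_concave a b c d xp h1' hgp0) as [_ hgf].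
      set (r1 := xg_minus a b c d) in *. set (r2 := xg_plus a b c d) in *.
      assert (hr1 : r1 < xp < r2) by (apply hg; auto).
      assert (hr2B : r2 < xB c d).
      { destruct (Rlt_dec r2 (xB c d)) as [?|hh]; auto. exfalso.
        set (xb := xB c d) in *.
        assert (0 <= gq a b c d xb).
        { rewrite hgf. assert (0 < xb - r1) by lra. assert (xb - r2 <= 0) by lra.
          assert ((xb - r1) * (xb - r2) <= 0) by nra.
          replace ((1 - a) * (xb - r1) * (xb - r2)) with ((a-1) * (-((xb - r1) * (xb - r2)))) by ring.
          apply Rmult_le_pos; lra. }
        assert (e : gq a b c d xb = xb * ((1-a)*xb - b)) by (unfold gq; nra).
        assert (h5 : 0 <= (1-a)*xb - b).
        { destruct (Rle_dec 0 ((1-a)*xb - b)) as [?|hh']; auto. exfalso. nra. }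
        rewrite Ffun_eq in hF0 by lra.
        replace d with (- c * xb) in hF0 by lra.
        set (t := a - 2) in *. set (be := -b) in *.
        assert (ht : 0 < t) by (unfold t; lra). assert (hbe : 0 < be) by (unfold be; lra).
        assert (h6 : c*xb*t^2 > be*c*t + be^2).
        { replace (2 - a) with (-t) in hF0 by (unfold t; ring).
          replace (a - 2) with t in hF0 by (unfold t; ring).
          replace b with (-be) in hF0 by (unfold be; ring). nra. }
        assert (h7 : (t+1)*xb <= be) by (unfold t, be in *; lra).
        assert (h8 : c*xb*t^2*(t+1) > (be*c*t + be^2)*(t+1)) by (apply Rmult_gt_compat_r; lra).
        assert (h9 : c*t^2*((t+1)*xb) <= c*t^2*be).
        { apply Rmult_le_compat_l; [|auto]. assert (0 <= t^2) by nra. nra. }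
        assert (0 < be^2*t) by nra. assert (0 < c*be*t) by nra.
        nra. }
      split; auto.
      intros z hz. split.
      * intro h. split. lra. right. apply hg. lra.
      * intros [h [hp|hp]]. rewrite hph in hp. nra.
        assert (z <= r1 \/ r2 <= z) by (apply hg; auto). lra.
    + assert (hDz : 0 <= Dl a b c d z0) by nra.
      assert (hz0p : xp <= z0).
      { destruct (Rle_dec xp z0) as [?|hh]; auto. exfalso.
        assert (0 < z0 - xm) by lra. assert (z0 - xp < 0) by lra.
        assert ((z0 - xm) * (z0 - xp) < 0) by nra.
        assert (a^2 * ((z0 - xm) * (z0 - xp)) < 0) by nra. nra. }
      fold xp. split; [lra|].
      intros z hz. split; [|tauto]. intro h. split; auto.
      destruct (Rle_dec z z0). left. rewrite hph. nra.
      right.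
      assert (ht : gq a b c d z = gq a b c d z0 + (2*(1-a)*z0 - (b+c))*(z - z0) + (1-a)*(z-z0)^2)
        by (unfold gq; ring).
      assert (hg' : 2*(1-a)*z0 - (b+c) < 0).
      { assert (e : 2*(1-a)*z0 - (b+c) = a*b/(a-2) - c) by (unfold z0; field; lra).
        rewrite e. assert (a*b/(a-2) < 0). { apply Rdiv_neg_pos; nra. } lra. }
      assert (0 <= (z - z0)^2) by nra.
      nra.
Qed.



Lemma reg_facts a b c d z : Hy a b c d ->
  (z <= xDelta_minus a b c d -> a*z+b < 0 /\ 0 <= Dl a b c d z /\ c*z+d < 0) /\
  (a*z + b < 0 -> 0 <= Dl a b c d z -> z <= xDelta_minus a b c d) /\
  (0 < a*z+b -> 0 <= Dl a b c d z -> xDelta_plus a b c d <= z) /\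
  (xDelta_plus a b c d <= z -> 0 < a*z+b /\ 0 <= Dl a b c d z).
Proof.
  intros H. assert (H' := H). destruct H' as (ha & hc & hb & hd & hab).
  destruct (basics a b c d H) as (hxA & hxB & hBA & hDD & hAA & hBB).
  pose proof (xm_xp a b c d H) as hmp.
  pose proof (Dl_fact a b c d z H) as hDf.
  set (xm := xDelta_minus a b c d) in *. set (xp := xDelta_plus a b c d) in *.
  set (xa := xA a b) in *. set (xb := xB c d) in *.
  assert (ha2 : 0 < a^2) by nra.
  repeat split; intros.
  - nra.
  - rewrite hDf. assert (0 <= (z - xm)*(z - xp)) by nra. nra.
  - nra.
  - destruct (Rle_dec z xm) as [?|hh]; auto. exfalso.
    assert (z < xa) by nra. assert ((z - xm)*(z-xp) < 0) by nra. nra.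
  - destruct (Rle_dec xp z) as [?|hh]; auto. exfalso.
    assert (xa < z) by nra. assert ((z - xm)*(z-xp) < 0) by nra. nra.
  - nra.
  - rewrite hDf. assert (0 <= (z - xm)*(z - xp)) by nra. nra.
Qed.

Lemma Lreg_sign a b c d z : Hy a b c d -> LC a b c d z ->
  forall n, 0 < (-1)^n * W a b c d n z.
Proof.
  intros H [hz hc] n. destruct (reg_facts a b c d z H) as [h1 _].
  destruct (h1 hz) as (hA & hD & hB).
  rewrite W_Vneg. apply V_pos; try lra.
  - unfold Dl in hD. lra.
  - unfold phi, gq in hc. destruct hc as [hc|hc]; [left|right]; nra.
Qed.

Lemma Lreg_escape a b c d z : Hy a b c d -> ~ LC a b c d z ->
  exists n, (1 <= n)%nat /\ (-1)^n * W a b c d n z <= 0.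
Proof.
  intros H hn. assert (H' := H). destruct H' as (ha & hc & hb & hd & hab).
  destruct (basics a b c d H) as (hxA & hxB & hBA & hDD & hAA & hBB).
  destruct (Rle_dec (xB c d) z) as [hz|hz].
  - exists 1%nat. split. lia. simpl. lra.
  - assert (hB : c*z+d < 0) by nra.
    destruct (V_escape (-(a*z+b)) (c*z+d) (-z) hB) as [n hv].
    + intros (h1 & h2 & h3). apply hn.
      destruct (reg_facts a b c d z H) as [_ [h _]].
      split. apply h. lra. unfold Dl. lra.
      unfold phi, gq. destruct h3 as [h3|h3]; [left|right]; nra.
    + rewrite <- W_Vneg in hv. exists n. split; auto.
      destruct n. simpl in hv. lra. lia.
Qed.

Lemma Wpos_right a b c d z : Hy a b c d -> xB c d <= z -> forall n, 0 < W a b c d n z.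
Proof.
  intros H hz. assert (H' := H). destruct H' as (ha & hc & hb & hd & hab).
  destruct (basics a b c d H) as (hxA & hxB & hBA & hDD & hAA & hBB).
  assert (hA : 0 < a*z+b) by nra. assert (hB : 0 <= c*z+d) by nra.
  assert (I : forall n, 0 < W a b c d n z /\ 0 < W a b c d (S n) z).
  { induction n as [|n [h1 h2]]. simpl. lra. split; auto. rewrite W_SS. nra. }
  intro n; apply I.
Qed.

Lemma Rreg_sign a b c d z : Hy a b c d -> (xB c d <= z \/ RC a b c d z) ->
  forall n, 0 < W a b c d n z.
Proof.
  intros H [hz|[hz hc]]. apply Wpos_right; auto.
  destruct (Rle_dec (xB c d) z). apply Wpos_right; auto.
  assert (H' := H). destruct H' as (ha & hc' & hb & hd & hab).
  destruct (basics a b c d H) as (hxA & hxB & hBA & hDD & hAA & hBB).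
  intro m. destruct (reg_facts a b c d z H) as (_&_&_&h4).
  destruct (h4 hz) as [hA hD].
  rewrite W_V. apply V_pos; try lra.
  - nra.
  - unfold Dl in hD. lra.
  - unfold phi, gq in hc. destruct hc as [hc|hc]; [left|right]; nra.
Qed.

Lemma Rreg_escape a b c d z : Hy a b c d -> z < xB c d -> ~ RC a b c d z ->
  exists n, (1 <= n)%nat /\ W a b c d n z <= 0.
Proof.
  intros H hz hn. assert (H' := H). destruct H' as (ha & hc & hb & hd & hab).
  destruct (basics a b c d H) as (hxA & hxB & hBA & hDD & hAA & hBB).
  assert (hB : c*z+d < 0) by nra.
  destruct (V_escape (a*z+b) (c*z+d) z hB) as [n hv].
  - intros (h1 & h2 & h3). apply hn.
    destruct (reg_facts a b c d z H) as (_&_&h&_).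
    split. apply h. lra. unfold Dl. lra.
    unfold phi, gq. destruct h3 as [h3|h3]; [left|right]; nra.
  - rewrite <- W_V in hv. exists n. split; auto.
    destruct n. simpl in hv. lra. lia.
Qed.

Definition Good a b c d n xs := length xs = n /\ StronglySorted Rlt xs /\
  (forall x, In x xs -> fst (uv a b c d) < x < xB c d) /\
  exists k, 0 < k /\ forall z, W a b c d n z = k * prod_lin xs z.

Lemma Good_zero a b c d n xs : Good a b c d n xs -> forall z, W a b c d n z = 0 <-> In z xs.
Proof.
  intros (_ & _ & _ & k & hk & hW) z. rewrite hW, <- prod_lin_zero. split; intro h.
  - apply Rmult_integral in h as [h|h]; auto. lra.
  - rewrite h; ring.
Qed.

Lemma m1sq n : (-1)^n * (-1)^n = 1.
Proof. induction n; simpl. ring. replace (-1 * (-1)^n * (-1 * (-1)^n)) with ((-1)^n * (-1)^n) by ring. auto. Qed.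

Lemma u_facts a b c d : Hy a b c d -> LC a b c d (fst (uv a b c d)) /\ fst (uv a b c d) < 0.
Proof.
  intro H. assert (hL : LC a b c d (fst (uv a b c d))) by (apply (SA_L a b c d H); lra).
  split; auto. destruct (Rlt_dec (fst (uv a b c d)) 0) as [?|hh]; auto. exfalso.
  assert (LC a b c d 0) by (apply (SA_L a b c d H); lra).
  assert (h := Lreg_sign a b c d 0 H H0 1). simpl in h. lra.
Qed.

Lemma Alt_neg f s l : Alt f s l -> Alt (fun y => - f y) (-s) l.
Proof.
  revert s; induction l as [|x l IH]; simpl; auto. intros s [h1 h2]. split. lra.
  replace (- - s) with (- (-s)) by ring. apply IH. replace (- - s) with s in * by ring. auto.
Qed.

Lemma Q_all a b c d : Hy a b c d -> forall n, exists xs ys,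
  Good a b c d n xs /\ Good a b c d (S n) ys /\ StronglySorted Rlt (interleave ys xs).
Proof.
  intros H. assert (H' := H). destruct H' as (ha & hc & hb & hd & hab).
  destruct (basics a b c d H) as (hxA & hxB & hBA & hDD & hAA & hBB).
  destruct (u_facts a b c d H) as [hLu hu0].
  set (u := fst (uv a b c d)) in *. set (xb := xB c d) in *.
  induction n as [|n IH].
  - exists [], [0]. split; [|split].
    + repeat split; simpl; try tauto. constructor. exists 1. split. lra. intro; simpl; ring.
    + split; [reflexivity|]. split; [repeat constructor|]. split.
      * intros w [hw|[]]; subst; split; [exact hu0|exact hxB].
      * exists 1. split. lra. intro; simpl; ring.
    + simpl. repeat constructor.
  - destruct IH as (xs & ys & (hx1 & hx2 & hx3 & k & hk & hkW) & Gy & hi).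
    assert (Gy' := Gy). destruct Gy' as (hy1 & hy2 & hy3 & k' & hk' & hk'W).
    set (f := W a b c d (S (S n))).
    assert (hfu : 0 < (-1)^n * f u).
    { assert (h := Lreg_sign a b c d u H hLu (S (S n))). unfold f.
      replace ((-1)^n) with ((-1)^(S (S n))) by (simpl; ring). auto. }
    assert (hfB : 0 < f xb) by (apply Wpos_right; [exact H| unfold xb; lra]).
    assert (hyz : forall y, In y ys -> W a b c d (S n) y = 0) by (intros; apply (Good_zero _ _ _ _ _ _ Gy); auto).
    assert (hAp := alt_prod xs ys hi ltac:(lia)). rewrite hx1 in hAp.
    assert (hAf : Alt f (-(-1)^n) ys).
    { apply Alt_neg in hAp. eapply Alt_imp; [|exact hAp].
      intros y s hy hs. unfold f. rewrite W_SS, hyz, hkW by auto.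
      destruct (hy3 y hy) as [_ hyB].
      fold xb in hyB. cbv beta in hs. assert (c*y < c*xb) by (apply Rmult_lt_compat_l; lra).
      assert (0 < -(c*y+d) * k) by (apply Rmult_lt_0_compat; lra).
      replace (s * ((a * y + b) * 0 + (c * y + d) * (k * prod_lin xs y))) with
        ((-(c*y+d) * k) * (s * - prod_lin xs y)) by ring.
      apply Rmult_lt_0_compat; auto. }
    assert (hAfB : Alt f (-(-1)^n) (ys ++ [xb])).
    { apply Alt_snoc; auto. rewrite hy1. simpl.
      replace (- (-1) ^ n * (-1 * (-1) ^ n) * f xb) with (((-1)^n * (-1)^n) * f xb) by ring.
      rewrite m1sq. lra. }
    destruct (ivt_chain f xb (W_cont a b c d (S (S n))) ys u ((-1)^n)) as (zs & hz1 & hz2 & hz3).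
    + auto.
    + auto.
    + lra.
    + simpl. split; auto.
    + exists ys, zs. split; [exact Gy|]. split; auto.
      assert (hzs : StronglySorted Rlt zs) by (eapply SS_inter_l; eauto).
      destruct (W_factor a b c d (S (S n)) zs) as [k2 hk2].
      * apply SS_NoDup; auto.
      * intros r hr. apply hz2; auto.
      * lia.
      * repeat split; auto. lia. apply hz2; auto. apply hz2; auto.
        exists k2. split; auto.
        assert (0 < prod_lin zs xb) by (apply prod_pos; intros r hr; apply hz2; auto).
        assert (e := hk2 xb). fold f in e. nra.
Qed.



Lemma list_min (l : list R) : l <> [] -> exists m, In m l /\ forall x, In x l -> m <= x.
Proof.
  induction l as [|x l IH]; intro h; [congruence|].
  destruct l as [|y l'].
  - exists x. split. left; auto. intros w [hw|[]]; subst; lra.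
  - destruct IH as [m [hm1 hm2]]. discriminate.
    destruct (Rle_dec x m).
    + exists x. split. left; auto. intros w [hw|hw]. subst; lra. specialize (hm2 w hw). lra.
    + exists m. split. right; auto. intros w [hw|hw]. subst; lra. auto.
Qed.

Lemma list_max (l : list R) : l <> [] -> exists m, In m l /\ forall x, In x l -> x <= m.
Proof.
  induction l as [|x l IH]; intro h; [congruence|].
  destruct l as [|y l'].
  - exists x. split. left; auto. intros w [hw|[]]; subst; lra.
  - destruct IH as [m [hm1 hm2]]. discriminate.
    destruct (Rle_dec m x).
    + exists x. split. left; auto. intros w [hw|hw]. subst; lra. specialize (hm2 w hw). lra.
    + exists m. split. right; auto. intros w [hw|hw]. subst; lra. auto.
Qed.

Lemma nonempty_len (l : list R) n : length l = n -> (1 <= n)%nat -> l <> [].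
Proof. intros h1 h2 e. subst. simpl in h2. lia. Qed.

Lemma sharp_u a b c d : Hy a b c d -> limit_of_zeros a b c d (fst (uv a b c d)).
Proof.
  intro H. destruct (u_facts a b c d H) as [hLu hu0].
  assert (Hmin : forall n, exists m, (1 <= n)%nat -> W a b c d n m = 0 /\
      forall r, W a b c d n r = 0 -> m <= r).
  { intro n. destruct (Nat.le_gt_cases 1 n) as [hn|hn]; [|exists 0; intro; lia].
    destruct (Q_all a b c d H n) as (xs & ys & Gx & _ & _).
    destruct (list_min xs) as [m [hm1 hm2]].
    { eapply nonempty_len; [apply Gx|auto]. }
    exists m. intros _. split. apply (Good_zero _ _ _ _ _ _ Gx); auto.
    intros r hr. apply hm2. apply (Good_zero _ _ _ _ _ _ Gx); auto. }
  set (m := fun n => proj1_sig (constructive_indefinite_description _ (Hmin n))).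
  assert (hm : forall n, (1 <= n)%nat -> W a b c d n (m n) = 0 /\
      forall r, W a b c d n r = 0 -> m n <= r).
  { intro n. unfold m. destruct (constructive_indefinite_description _ (Hmin n)); simpl; auto. }
  set (u := fst (uv a b c d)) in *.
  assert (hmu : forall n, (1 <= n)%nat -> u < m n).
  { intros n hn. destruct (Q_all a b c d H n) as (xs & ys & Gx & _ & _).
    destruct (hm n hn) as [h1 _]. apply (Good_zero _ _ _ _ _ _ Gx) in h1.
    destruct Gx as (_ & _ & h3 & _). apply h3; auto. }
  assert (hmono : forall n, (1 <= n)%nat -> m (S n) < m n).
  { intros n hn. destruct (Q_all a b c d H n) as (xs & ys & Gx & Gy & hi).
    destruct (hm n hn) as [h1 _]. apply (Good_zero _ _ _ _ _ _ Gx) in h1.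
    destruct (inter_lt xs ys (m n) hi) as [y [hy1 hy2]]; auto.
    { destruct Gx as (e1 & _). destruct Gy as (e2 & _). lia. }
    apply (Good_zero _ _ _ _ _ _ Gy) in hy1.
    destruct (hm (S n) ltac:(lia)) as [_ h2]. specialize (h2 y hy1). lra. }
  exists m. split. intros n hn. apply hm; auto.
  intros eps heps.
  set (z := u + eps/2).
  assert (hnL : ~ LC a b c d z).
  { intro h. apply (SA_L a b c d H) in h. fold u in h. unfold z in h. lra. }
  destruct (Lreg_escape a b c d z H hnL) as [n [hn hw]].
  assert (hmz : m n <= z).
  { destruct (hm n hn) as [_ h2].
    destruct (Req_dec (W a b c d n z) 0) as [e|e]. apply h2; auto.
    assert (hs := Lreg_sign a b c d u H hLu n).
    assert (hsq := m1sq n).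
    assert (hzz : (-1)^n * W a b c d n z < 0).
    { destruct hw as [hw|hw]; auto. exfalso. apply e.
      assert (ee : W a b c d n z = (-1)^n * ((-1)^n * W a b c d n z)) by (rewrite <- Rmult_assoc, hsq; ring).
      rewrite hw in ee. lra. }
    destruct (ivt_strict (W a b c d n) u z (W_cont a b c d n)) as [w [hw1 hw2]].
    unfold z; lra.
    { assert (hpq : ((-1)^n * W a b c d n u) * ((-1)^n * W a b c d n z) < 0).
      { set (p := (-1)^n * W a b c d n u) in *. set (q := (-1)^n * W a b c d n z) in *. nra. }
      replace (((-1)^n * W a b c d n u) * ((-1)^n * W a b c d n z)) with
        (((-1)^n * (-1)^n) * (W a b c d n u * W a b c d n z)) in hpq by ring.
      rewrite hsq in hpq. lra. }
    specialize (h2 w hw2). lra. }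
  exists n. intros k hk. unfold R_dist.
  assert (hmk : m k <= m n).
  { induction hk. lra. assert (m (S m0) < m m0) by (apply hmono; lia). lra. }
  assert (u < m k) by (apply hmu; lia).
  rewrite Rabs_right by lra. unfold z in hmz. lra.
Qed.

Lemma sharp_v a b c d : Hy a b c d -> limit_of_zeros a b c d (snd (uv a b c d)).
Proof.
  intro H. destruct (SA_R a b c d H) as (hpB & hvB & hchar).
  assert (Hmax : forall n, exists m, (1 <= n)%nat -> W a b c d n m = 0 /\
      forall r, W a b c d n r = 0 -> r <= m).
  { intro n. destruct (Nat.le_gt_cases 1 n) as [hn|hn]; [|exists 0; intro; lia].
    destruct (Q_all a b c d H n) as (xs & ys & Gx & _ & _).
    destruct (list_max xs) as [m [hm1 hm2]].
    { eapply nonempty_len; [apply Gx|auto]. }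
    exists m. intros _. split. apply (Good_zero _ _ _ _ _ _ Gx); auto.
    intros r hr. apply hm2. apply (Good_zero _ _ _ _ _ _ Gx); auto. }
  set (m := fun n => proj1_sig (constructive_indefinite_description _ (Hmax n))).
  assert (hm : forall n, (1 <= n)%nat -> W a b c d n (m n) = 0 /\
      forall r, W a b c d n r = 0 -> r <= m n).
  { intro n. unfold m. destruct (constructive_indefinite_description _ (Hmax n)); simpl; auto. }
  set (v := snd (uv a b c d)) in *.
  assert (hRv : RC a b c d v) by (apply hchar; lra).
  assert (hWv : forall n, 0 < W a b c d n v) by (apply Rreg_sign; auto).
  assert (hmv : forall n, (1 <= n)%nat -> m n < v).
  { intros n hn. destruct (hm n hn) as [h1 _].
    destruct (Q_all a b c d H n) as (xs & ys & Gx & _ & _).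
    assert (h1' := h1). apply (Good_zero _ _ _ _ _ _ Gx) in h1'.
    destruct Gx as (_ & _ & h3 & _). destruct (h3 _ h1') as [_ hB].
    destruct (Rlt_dec (m n) v) as [?|hh]; auto. exfalso.
    assert (RC a b c d (m n)) by (apply hchar; lra).
    assert (0 < W a b c d n (m n)) by (apply Rreg_sign; auto). lra. }
  assert (hmono : forall n, (1 <= n)%nat -> m n < m (S n)).
  { intros n hn. destruct (Q_all a b c d H n) as (xs & ys & Gx & Gy & hi).
    destruct (hm n hn) as [h1 _]. apply (Good_zero _ _ _ _ _ _ Gx) in h1.
    destruct (inter_gt xs ys (m n) hi) as [y [hy1 hy2]]; auto.
    { destruct Gx as (e1 & _). destruct Gy as (e2 & _). lia. }
    apply (Good_zero _ _ _ _ _ _ Gy) in hy1.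
    destruct (hm (S n) ltac:(lia)) as [_ h2]. specialize (h2 y hy1). lra. }
  exists m. split. intros n hn. apply hm; auto.
  intros eps heps.
  set (z := v - eps/2).
  assert (hz1 : v - eps/2 <= z) by (unfold z; lra).
  assert (hz2 : z < v) by (unfold z; lra).
  assert (hz3 : z < xB c d) by lra.
  assert (hnR : ~ RC a b c d z).
  { intro h. apply (hchar z hz3) in h. lra. }
  destruct (Rreg_escape a b c d z H hz3 hnR) as [n [hn hw]].
  assert (hmz : z <= m n).
  { destruct (hm n hn) as [_ h2].
    destruct hw as [hw|hw].
    - destruct (ivt_strict (W a b c d n) z v (W_cont a b c d n)) as [w [hw1 hw2]].
      lra. specialize (hWv n). nra.
      specialize (h2 w hw2). lra.
    - apply h2; auto. }
  exists n. intros k hk. unfold R_dist.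
  assert (hmk : m n <= m k).
  { induction hk. lra. assert (m m0 < m (S m0)) by (apply hmono; lia). lra. }
  assert (m k < v) by (apply hmv; lia).
  rewrite Rabs_left by lra. lra.
Qed.

Theorem theorem3p4 (a b c d : R)
  (ha : 0 < a) (hc : 0 < c) (hb : b < 0) (hd : d < 0)
  (hAB : xA a b < xB c d) :
  (* each W_n is real-rooted with n distinct zeros *)
  (forall n : nat, exists (k : R) (rs : list R),
      k <> 0 /\ length rs = n /\ StronglySorted Rlt rs /\
      forall z, W a b c d n z = k * prod_lin rs z) /\
  (* R_n is contained in (u, v) *)
  (forall n rs, zero_list a b c d n rs ->
      forall r, In r rs -> fst (uv a b c d) < r < snd (uv a b c d)) /\
  (* R_{n+1} strictly interlaces R_n *)
  (forall n rs rs', zero_list a b c d n rs -> zero_list a b c d (S n) rs' ->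
      strictly_interlaces rs' rs) /\
  (* sharpness *)
  limit_of_zeros a b c d (fst (uv a b c d)) /\
  limit_of_zeros a b c d (snd (uv a b c d)).
Proof.
  assert (H : Hy a b c d) by (repeat split; auto).
  split; [|split; [|split; [|split]]].
  - intro n. destruct (Q_all a b c d H n) as (xs & ys & (h1 & h2 & h3 & k & hk & hW) & _ & _).
    exists k, xs. repeat split; auto. lra.
  - intros n rs [hnd hz] r hr.
    destruct (Q_all a b c d H n) as (xs & ys & Gx & _ & _).
    assert (hr0 : W a b c d n r = 0) by (apply hz; auto).
    assert (hrx := hr0). apply (Good_zero _ _ _ _ _ _ Gx) in hrx.
    destruct Gx as (_ & _ & h3 & _). destruct (h3 r hrx) as [hu hB].
    split; auto.
    destruct (SA_R a b c d H) as (_ & _ & hchar).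
    destruct (Rlt_dec r (snd (uv a b c d))) as [?|hh]; auto. exfalso.
    assert (RC a b c d r) by (apply hchar; lra).
    assert (0 < W a b c d n r) by (apply Rreg_sign; auto). lra.
  - intros n rs rs' [hnd hz] [hnd' hz'].
    destruct (Q_all a b c d H n) as (xs & ys & Gx & Gy & hi).
    exists ys, xs. split; [|split; [|split]].
    + apply NoDup_Permutation; auto. apply SS_NoDup. apply Gy.
      intro x. rewrite <- hz'. apply (Good_zero _ _ _ _ _ _ Gy).
    + apply NoDup_Permutation; auto. apply SS_NoDup. apply Gx.
      intro x. rewrite <- hz. apply (Good_zero _ _ _ _ _ _ Gx).
    + right. destruct Gx as (e1 & _). destruct Gy as (e2 & _). lia.
    + auto.
  - apply sharp_u; auto.
  - apply sharp_v; auto.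
Qed.
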